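(* The Hausdorff mapping $\mathcal{H}\colon\mathcal{M}\to\mathcal{M}$ is nonexpanding, and its Lipschitz constant is exactly $1$: for all compact metric spaces $X,Y$ one has $d_{GH}(\mathcal{H}(X),\mathcal{H}(Y)) \le d_{GH}(X,Y)$, and for a one-point space $\{x\}$ and every compact metric space $Y$ one has $d_{GH}\bigl(\mathcal{H}(\{x\}),\mathcal{H}(Y)\bigr) = d_{GH}(\{x\},Y)$.
   Context: $\mathcal{M}$ denotes the set of isometry classes of compact metric spaces with the Gromov–Hausdorff distance $d_{GH}$ (the infimum of $r$ such that there is a metric space $Z$ containing isometric copies $X',Y'$ of $X,Y$ with Hausdorff distance $|X'Y'|_Z\le r$). For a compact metric space $X$, $\mathcal{H}(X)$ is the set of all nonempty closed subsets of $X$ with the Hausdorff distance $|AB| = \max\{\sup_{a\in A}\inf_{b\in B}|ab|, \sup_{b\in B}\inf_{a\in A}|ab|\}$; the Hausdorff mapping sends $X$ to $\mathcal{H}(X)$. *)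

(* Defs.v *)
From Stdlib Require Import Reals Lra Classical ClassicalEpsilon.
Open Scope R_scope.

(** Supremum / infimum of a set of reals (classical choice).  Defaults to 0
    if the set is empty or unbounded (never happens in our uses). *)
Definition Rsup (E : R -> Prop) : R :=
  match excluded_middle_informative (bound E /\ exists x, E x) with
  | left H => proj1_sig (completeness E (proj1 H) (proj2 H))
  | right _ => 0
  end.

Definition Rinf (E : R -> Prop) : R := - Rsup (fun x => E (- x)).

Record MetricSpace := {
  carrier :> Type;
  mdist : carrier -> carrier -> R;
  dist_eq0 : forall x y, mdist x y = 0 <-> x = y;
  dist_sym : forall x y, mdist x y = mdist y x;
  dist_tri : forall x y z, mdist x z <= mdist x y + mdist y z
}.
Arguments mdist {m} _ _.

Definition converges_to {T : Type} (d : T -> T -> R) (u : nat -> T) (l : T) : Prop :=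
  forall eps, 0 < eps -> exists N, forall n, (N <= n)%nat -> d (u n) l < eps.

(** Sequential compactness (equivalent to compactness for metric spaces). *)
Definition compact_space (X : MetricSpace) : Prop :=
  forall u : nat -> X, exists (phi : nat -> nat) (l : X),
    (forall n m, (n < m)%nat -> (phi n < phi m)%nat) /\
    converges_to (@mdist X) (fun n => u (phi n)) l.

Definition closed_set (X : MetricSpace) (A : X -> Prop) : Prop :=
  forall (u : nat -> X) (l : X),
    (forall n, A (u n)) -> converges_to (@mdist X) u l -> A l.

Definition hausdorff {T : Type} (d : T -> T -> R) (A B : T -> Prop) : R :=
  Rmax
    (Rsup (fun s => exists a, A a /\ s = Rinf (fun t => exists b, B b /\ t = d a b)))
    (Rsup (fun s => exists b, B b /\ s = Rinf (fun t => exists a, A a /\ t = d a b))).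

Definition Hyp (X : MetricSpace) : Type :=
  { A : X -> Prop | (exists x, A x) /\ closed_set X A }.

Definition hyp_dist (X : MetricSpace) (A B : Hyp X) : R :=
  hausdorff (@mdist X) (proj1_sig A) (proj1_sig B).

Definition isometric_embedding {T : Type} (d : T -> T -> R) (Z : MetricSpace)
  (f : T -> Z) : Prop :=
  forall a b, mdist (f a) (f b) = d a b.

Definition GH {T1 : Type} (d1 : T1 -> T1 -> R) {T2 : Type} (d2 : T2 -> T2 -> R) : R :=
  Rinf (fun r => exists (Z : MetricSpace) (f : T1 -> Z) (g : T2 -> Z),
          isometric_embedding d1 Z f /\ isometric_embedding d2 Z g /\
          hausdorff (@mdist Z) (fun z => exists a, z = f a) (fun z => exists b, z = g b) <= r).

(* Main.v *)
Require Import Defs.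
From Stdlib Require Import Reals Lra Lia Classical ClassicalEpsilon FunctionalExtensionality PropExtensionality ProofIrrelevance.
Open Scope R_scope.

Lemma Rsup_spec (E : R -> Prop) : bound E -> (exists x, E x) -> is_lub E (Rsup E).
Proof.
  intros Hb He. unfold Rsup.
  destruct (excluded_middle_informative _) as [H|H].
  - destruct (completeness E (proj1 H) (proj2 H)) as [s Hs]. exact Hs.
  - exfalso; tauto.
Qed.

Lemma Rsup_empty (E : R -> Prop) : ~ (exists x, E x) -> Rsup E = 0.
Proof.
  intros He. unfold Rsup.
  destruct (excluded_middle_informative _) as [H|H]; [exfalso; apply He; apply H|reflexivity].
Qed.

Lemma Rsup_unb (E : R -> Prop) : ~ bound E -> Rsup E = 0.
Proof.
  intros He. unfold Rsup.
  destruct (excluded_middle_informative _) as [H|H]; [exfalso; apply He; apply H|reflexivity].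
Qed.

Lemma Rsup_ge (E : R -> Prop) M x : E x -> (forall y, E y -> y <= M) -> x <= Rsup E.
Proof.
  intros Hx HM. destruct (Rsup_spec E) as [H1 H2].
  - exists M; exact HM.
  - eauto.
  - apply H1; auto.
Qed.

Lemma Rsup_le_ne (E : R -> Prop) M : (exists x, E x) -> (forall y, E y -> y <= M) -> Rsup E <= M.
Proof.
  intros Hx HM. destruct (Rsup_spec E) as [H1 H2].
  - exists M; exact HM.
  - eauto.
  - apply H2; exact HM.
Qed.

Lemma Rsup_le (E : R -> Prop) M : 0 <= M -> (forall y, E y -> y <= M) -> Rsup E <= M.
Proof.
  intros H0 HM. destruct (classic (exists x, E x)) as [He|He].
  - apply Rsup_le_ne; auto.
  - rewrite Rsup_empty; auto.
Qed.

Lemma Rsup_nonneg (E : R -> Prop) : (forall y, E y -> 0 <= y) -> 0 <= Rsup E.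
Proof.
  intros H. destruct (classic (exists x, E x)) as [[x Hx]|He].
  - destruct (classic (bound E)) as [Hb|Hb].
    + destruct (Rsup_spec E Hb (ex_intro _ x Hx)) as [H1 H2].
      apply Rle_trans with x; auto.
    + rewrite Rsup_unb; auto; lra.
  - rewrite Rsup_empty; auto; lra.
Qed.

Lemma Rsup_single (E : R -> Prop) v : (forall x, E x <-> x = v) -> Rsup E = v.
Proof.
  intros H. apply Rle_antisym.
  - apply Rsup_le_ne. exists v; apply H; auto. intros y Hy; apply H in Hy; lra.
  - apply Rsup_ge with v. apply H; auto. intros y Hy; apply H in Hy; lra.
Qed.

Lemma Rinf_le (E : R -> Prop) m t : E t -> (forall x, E x -> m <= x) -> Rinf E <= t.
Proof.
  intros Ht Hm. unfold Rinf.
  assert (- t <= Rsup (fun x => E (- x))).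
  { apply Rsup_ge with (- m). rewrite Ropp_involutive; auto.
    intros y Hy. apply Hm in Hy. lra. }
  lra.
Qed.

Lemma Rinf_ge (E : R -> Prop) m : (exists x, E x) -> (forall x, E x -> m <= x) -> m <= Rinf E.
Proof.
  intros [t Ht] Hm. unfold Rinf.
  assert (Rsup (fun x => E (- x)) <= - m).
  { apply Rsup_le_ne. exists (- t). rewrite Ropp_involutive; auto.
    intros y Hy. apply Hm in Hy. lra. }
  lra.
Qed.

Lemma Rinf_empty (E : R -> Prop) : ~ (exists x, E x) -> Rinf E = 0.
Proof.
  intros H. unfold Rinf. rewrite Rsup_empty. lra.
  intros [x Hx]; apply H; eauto.
Qed.

Lemma Rinf_nonneg (E : R -> Prop) : (forall y, E y -> 0 <= y) -> 0 <= Rinf E.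
Proof.
  intros H. destruct (classic (exists x, E x)) as [He|He].
  - apply Rinf_ge; auto.
  - rewrite Rinf_empty; auto; lra.
Qed.

Lemma Rinf_single (E : R -> Prop) v : (forall x, E x <-> x = v) -> Rinf E = v.
Proof.
  intros H. apply Rle_antisym.
  - apply Rinf_le with v. apply H; auto. intros y Hy; apply H in Hy; lra.
  - apply Rinf_ge. exists v; apply H; auto. intros y Hy; apply H in Hy; lra.
Qed.

Lemma Rinf_mono (E1 E2 : R -> Prop) : (exists x, E2 x) -> (forall x, E2 x -> E1 x) ->
  (forall x, E1 x -> 0 <= x) -> Rinf E1 <= Rinf E2.
Proof.
  intros He Hs H0. apply Rinf_ge; auto.
  intros x Hx. apply Rinf_le with 0; auto.
Qed.

Lemma le_eps x y : (forall eps, 0 < eps -> x <= y + eps) -> x <= y.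
Proof.
  intros H. destruct (Rle_lt_dec x y) as [h|h]; auto.
  specialize (H ((x - y)/2)). lra.
Qed.

Lemma dist_nonneg (Z : MetricSpace) (x y : Z) : 0 <= mdist x y.
Proof.
  pose proof (Defs.dist_tri Z x y x). rewrite (Defs.dist_sym Z y x) in H.
  assert (mdist x x = 0) by (apply Defs.dist_eq0; auto). lra.
Qed.

Lemma dist_refl (Z : MetricSpace) (x : Z) : mdist x x = 0.
Proof. apply Defs.dist_eq0; auto. Qed.

Lemma hausdorff_nonneg {T} (d : T -> T -> R) A B : (forall x y, 0 <= d x y) -> 0 <= hausdorff d A B.
Proof.
  intros H. unfold hausdorff. apply Rle_trans with (2 := Rmax_l _ _).
  apply Rsup_nonneg. intros y [a [_ ->]]. apply Rinf_nonneg. intros t [b [_ ->]]; auto.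
Qed.

Lemma hausdorff_le_inf {T} (d : T -> T -> R) (A B : T -> Prop) r : 0 <= r ->
  (forall a, A a -> Rinf (fun t => exists b, B b /\ t = d a b) <= r) ->
  (forall b, B b -> Rinf (fun t => exists a, A a /\ t = d a b) <= r) ->
  hausdorff d A B <= r.
Proof.
  intros H0 H1 H2. unfold hausdorff. apply Rmax_lub; apply Rsup_le; auto.
  - intros y [a [Ha ->]]; auto.
  - intros y [a [Ha ->]]; auto.
Qed.

Lemma Rinf_wit {T} (B : T -> Prop) (P : T -> R) b r :
  (forall x, 0 <= P x) -> B b -> P b <= r -> Rinf (fun t => exists b, B b /\ t = P b) <= r.
Proof.
  intros H0 Hb Hr. apply Rle_trans with (P b); auto.
  apply Rinf_le with 0. eauto. intros x [c [_ ->]]; auto.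
Qed.

Definition sincr (phi : nat -> nat) := forall n m, (n < m)%nat -> (phi n < phi m)%nat.

Definition good (Z : MetricSpace) (S : Z -> Prop) :=
  (exists z, S z) /\ forall u : nat -> Z, (forall n, S (u n)) ->
    exists phi l, sincr phi /\ S l /\ converges_to (@mdist Z) (fun n => u (phi n)) l.

Lemma sincr_ge phi : sincr phi -> forall n, (n <= phi n)%nat.
Proof.
  intros H n. induction n. lia. specialize (H n (S n)). lia.
Qed.

Lemma choice_nat {A : Type} (P : nat -> A -> Prop) : (forall n, exists x, P n x) -> exists u, forall n, P n (u n).
Proof.
  intros H. exists (fun n => proj1_sig (constructive_indefinite_description _ (H n))).
  intros n. exact (proj2_sig (constructive_indefinite_description _ (H n))).
Qed.

Lemma choice_fun {A B : Type} (P : A -> B -> Prop) : (forall n, exists x, P n x) -> exists u, forall n, P n (u n).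
Proof.
  intros H. exists (fun n => proj1_sig (constructive_indefinite_description _ (H n))).
  intros n. exact (proj2_sig (constructive_indefinite_description _ (H n))).
Qed.

Lemma sub_conv {T} (d : T -> T -> R) u l phi : converges_to d u l -> sincr phi ->
  converges_to d (fun n => u (phi n)) l.
Proof.
  intros H Hp eps He. destruct (H eps He) as [N HN]. exists N. intros n Hn.
  apply HN. pose proof (sincr_ge phi Hp n). lia.
Qed.

Lemma good_bounded (Z : MetricSpace) (S : Z -> Prop) (z0 : Z) : good Z S ->
  exists M, forall a, S a -> mdist a z0 <= M.
Proof.
  intros [_ HS]. apply NNPP. intros HM.
  assert (forall n : nat, exists a, S a /\ INR n < mdist a z0).
  { intros n. apply NNPP. intros Hn. apply HM. exists (INR n). intros a Ha.
    destruct (Rle_lt_dec (mdist a z0) (INR n)); auto. exfalso; apply Hn; eauto. }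
  apply choice_nat in H as [u Hu].
  destruct (HS u (fun n => proj1 (Hu n))) as [phi [l [Hp [Hl Hc]]]].
  destruct (Hc 1 ltac:(lra)) as [N HN].
  destruct (INR_archimed 1 (1 + mdist l z0) ltac:(lra)) as [n0 Hn0].
  set (n := Nat.max N n0).
  specialize (HN n ltac:(unfold n; lia)).
  pose proof (proj2 (Hu (phi n))).
  pose proof (sincr_ge phi Hp n).
  assert (INR n0 <= INR (phi n)) by (apply le_INR; unfold n in *; lia).
  pose proof (Defs.dist_tri Z (u (phi n)) l z0). lra.
Qed.

Lemma attain (Z : MetricSpace) (S : Z -> Prop) (a : Z) : good Z S ->
  exists b, S b /\ forall b', S b' -> mdist a b <= mdist a b'.
Proof.
  intros [[z0 Hz0] HS].
  set (delta := Rinf (fun t => exists b, S b /\ t = mdist a b)).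
  assert (Hd : forall b', S b' -> delta <= mdist a b').
  { intros b' Hb'. apply Rinf_le with 0. eauto. intros x [c [_ ->]]; apply dist_nonneg. }
  assert (forall n : nat, exists b, S b /\ mdist a b < delta + / INR (Datatypes.S n)).
  { intros n. apply NNPP. intros Hn.
    assert (delta + / INR (Datatypes.S n) <= delta).
    { apply Rinf_ge. exists (mdist a z0); eauto. intros x [c [Hc ->]].
      destruct (Rle_lt_dec (delta + / INR (Datatypes.S n)) (mdist a c)); auto.
      exfalso; apply Hn; eauto. }
    assert (0 < / INR (Datatypes.S n)) by (apply Rinv_0_lt_compat, lt_0_INR; lia). lra. }
  apply choice_nat in H as [u Hu].
  destruct (HS u (fun n => proj1 (Hu n))) as [phi [l [Hp [Hl Hc]]]].
  exists l; split; auto. intros b' Hb'. apply Rle_trans with delta; auto.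
  apply le_eps. intros eps He.
  destruct (Hc (eps/2) ltac:(lra)) as [N HN].
  destruct (archimed_cor1 (eps/2) ltac:(lra)) as [K [HK HK0]].
  set (n := Nat.max N K).
  specialize (HN n ltac:(unfold n; lia)).
  pose proof (proj2 (Hu (phi n))).
  pose proof (sincr_ge phi Hp n).
  assert (/ INR (Datatypes.S (phi n)) <= / INR K).
  { apply Rinv_le_contravar. apply lt_0_INR; auto. apply le_INR; unfold n in *; lia. }
  pose proof (Defs.dist_tri Z a (u (phi n)) l).
  rewrite (Defs.dist_sym Z (u (phi n)) l) in *. lra.
Qed.

Definition delta {T} (d : T -> T -> R) a (B : T -> Prop) := Rinf (fun t => exists b, B b /\ t = d a b).
Definition h1 {T} (d : T -> T -> R) (A B : T -> Prop) := Rsup (fun s => exists a, A a /\ s = delta d a B).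

Lemma haus_h1 {T} (d : T -> T -> R) A B : (forall x y, d x y = d y x) ->
  hausdorff d A B = Rmax (h1 d A B) (h1 d B A).
Proof.
  intros Hs. unfold hausdorff, h1, delta. f_equal. f_equal.
  apply functional_extensionality; intro s; apply propositional_extensionality.
  split; intros [b [Hb ->]]; exists b; split; auto; f_equal;
    apply functional_extensionality; intro t; apply propositional_extensionality;
    split; intros [a [Ha ->]]; exists a; split; auto.
Qed.

Section HM.
Variable Z : MetricSpace.
Notation d := (@mdist Z).

Lemma delta_le a (B : Z -> Prop) b : B b -> delta d a B <= d a b.
Proof. intros Hb. apply Rinf_le with 0. eauto. intros x [c [_ ->]]; apply dist_nonneg. Qed.

Lemma delta_nonneg a (B : Z -> Prop) : 0 <= delta d a B.
Proof. apply Rinf_nonneg. intros x [c [_ ->]]; apply dist_nonneg. Qed.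

Lemma h1_nonneg (A B : Z -> Prop) : 0 <= h1 d A B.
Proof. apply Rsup_nonneg. intros x [c [_ ->]]; apply delta_nonneg. Qed.

Lemma delta_bound (A B : Z -> Prop) : good Z A -> good Z B ->
  exists M, forall a, A a -> delta d a B <= M.
Proof.
  intros HA HB. destruct HB as [[b0 Hb0] HB'].
  destruct (good_bounded Z A b0 HA) as [M HM]. exists M. intros a Ha.
  apply Rle_trans with (d a b0); auto. apply delta_le; auto.
Qed.

Lemma delta_le_h1 (A B : Z -> Prop) a : good Z A -> good Z B -> A a -> delta d a B <= h1 d A B.
Proof.
  intros HA HB Ha. destruct (delta_bound A B HA HB) as [M HM].
  apply Rsup_ge with M. eauto. intros y [c [Hc ->]]; auto.
Qed.

Lemma delta_tri a b (U : Z -> Prop) : (exists c, U c) -> delta d a U <= d a b + delta d b U.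
Proof.
  intros HU. assert (delta d a U - d a b <= delta d b U); [|lra].
  apply Rinf_ge. destruct HU as [c Hc]; eauto.
  intros x [c [Hc ->]]. pose proof (delta_le a U c Hc). pose proof (Defs.dist_tri Z a b c). lra.
Qed.

Lemma h1_tri (S T U : Z -> Prop) : good Z S -> good Z T -> good Z U ->
  h1 d S U <= h1 d S T + h1 d T U.
Proof.
  intros HS HT HU. apply Rsup_le.
  pose proof (h1_nonneg S T); pose proof (h1_nonneg T U); lra.
  intros y [a [Ha ->]].
  assert (delta d a U - h1 d T U <= delta d a T).
  { apply Rinf_ge. destruct HT as [[b Hb] _]; eauto.
    intros x [b [Hb ->]]. pose proof (delta_tri a b U (proj1 HU)).
    pose proof (delta_le_h1 T U b HT HU Hb). lra. }
  pose proof (delta_le_h1 S T a HS HT Ha). lra.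
Qed.

Lemma haus_tri (S T U : Z -> Prop) : good Z S -> good Z T -> good Z U ->
  hausdorff d S U <= hausdorff d S T + hausdorff d T U.
Proof.
  intros HS HT HU. rewrite !haus_h1 by apply Defs.dist_sym.
  pose proof (h1_tri S T U HS HT HU). pose proof (h1_tri U T S HU HT HS).
  pose proof (Rmax_l (h1 d S T) (h1 d T S)). pose proof (Rmax_r (h1 d S T) (h1 d T S)).
  pose proof (Rmax_l (h1 d T U) (h1 d U T)). pose proof (Rmax_r (h1 d T U) (h1 d U T)).
  apply Rmax_lub; lra.
Qed.

Lemma haus_sym (S T : Z -> Prop) : hausdorff d S T = hausdorff d T S.
Proof. rewrite !haus_h1 by apply Defs.dist_sym. apply Rmax_comm. Qed.

Lemma haus_refl (S : Z -> Prop) : hausdorff d S S = 0.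
Proof.
  apply Rle_antisym.
  - apply hausdorff_le_inf. lra.
    + intros a Ha. apply Rinf_wit with (b := a). intros; apply dist_nonneg. auto. rewrite dist_refl; lra.
    + intros a Ha. apply Rinf_wit with (b := a). intros; apply dist_nonneg. auto. rewrite dist_refl; lra.
  - apply hausdorff_nonneg. apply dist_nonneg.
Qed.

Lemma h1_zero_sub (S T : Z -> Prop) : good Z S -> good Z T -> h1 d S T <= 0 ->
  forall a, S a -> T a.
Proof.
  intros HS HT H a Ha. pose proof (delta_le_h1 S T a HS HT Ha).
  destruct (attain Z T a HT) as [b [Hb Hmin]].
  assert (delta d a T >= d a b).
  { apply Rle_ge. apply Rinf_ge. eauto. intros x [c [Hc ->]]; auto. }
  assert (Hab : d a b = 0) by (pose proof (dist_nonneg Z a b); lra).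
  apply Defs.dist_eq0 in Hab. subst; auto.
Qed.

Lemma haus_eq0 (S T : Z -> Prop) : good Z S -> good Z T -> hausdorff d S T = 0 -> S = T.
Proof.
  intros HS HT H. rewrite haus_h1 in H by apply Defs.dist_sym.
  pose proof (Rmax_l (h1 d S T) (h1 d T S)). pose proof (Rmax_r (h1 d S T) (h1 d T S)).
  apply functional_extensionality; intro a; apply propositional_extensionality; split.
  - apply h1_zero_sub; auto; lra.
  - apply h1_zero_sub; auto; lra.
Qed.

End HM.

Definition HSpace (Z : MetricSpace) (P : (Z -> Prop) -> Prop) (HP : forall S, P S -> good Z S) : MetricSpace.
Proof.
  refine {| carrier := {S : Z -> Prop | P S};
            mdist := fun A B => hausdorff (@mdist Z) (proj1_sig A) (proj1_sig B) |}.
  - intros [A HA] [B HB]; simpl. split.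
    + intros H. pose proof (haus_eq0 Z A B (HP A HA) (HP B HB) H). subst.
      f_equal. apply proof_irrelevance.
    + intros H. injection H as ->. apply haus_refl.
  - intros [A HA] [B HB]; simpl. apply haus_sym.
  - intros [A HA] [B HB] [C HC]; simpl. apply haus_tri; auto.
Defined.

Definition img {T1 T2 : Type} (f : T1 -> T2) (A : T1 -> Prop) : T2 -> Prop :=
  fun z => exists a, A a /\ z = f a.

Lemma setext {T} (E1 E2 : T -> Prop) : (forall x, E1 x <-> E2 x) -> E1 = E2.
Proof. intros H. apply functional_extensionality; intro; apply propositional_extensionality; auto. Qed.

Lemma hausdorff_img {T1 T2 : Type} (d1 : T1 -> T1 -> R) (d2 : T2 -> T2 -> R) (f : T1 -> T2) A B :
  (forall a b, d2 (f a) (f b) = d1 a b) ->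
  hausdorff d2 (img f A) (img f B) = hausdorff d1 A B.
Proof.
  intros Hf. unfold hausdorff.
  assert (E1 : forall a, (fun t => exists w, img f B w /\ t = d2 (f a) w) = (fun t => exists b, B b /\ t = d1 a b)).
  { intros a. apply setext; intro t; split.
    - intros [w [[b [Hb ->]] ->]]. eauto.
    - intros [b [Hb ->]]. exists (f b). split. exists b; auto. auto. }
  assert (E2 : forall b, (fun t => exists z, img f A z /\ t = d2 z (f b)) = (fun t => exists a, A a /\ t = d1 a b)).
  { intros b. apply setext; intro t; split.
    - intros [w [[a [Ha ->]] ->]]. eauto.
    - intros [a [Ha ->]]. exists (f a). split. exists a; auto. auto. }
  f_equal; f_equal; apply setext; intro s; split.
  - intros [z [[a [Ha ->]] ->]]. exists a. rewrite E1. auto.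
  - intros [a [Ha ->]]. exists (f a). split. exists a; auto. rewrite E1; auto.
  - intros [z [[a [Ha ->]] ->]]. exists a. rewrite E2. auto.
  - intros [a [Ha ->]]. exists (f a). split. exists a; auto. rewrite E2; auto.
Qed.

Lemma img_good (X Z : MetricSpace) (f : X -> Z) (A : X -> Prop) :
  compact_space X -> Defs.closed_set X A -> (exists a, A a) -> isometric_embedding (@mdist X) Z f ->
  good Z (img f A).
Proof.
  intros HX HA [a0 Ha0] Hf. split. exists (f a0); exists a0; auto.
  intros u Hu. apply choice_nat in Hu as [a Ha].
  destruct (HX a) as [phi [l [Hp Hc]]].
  assert (Hl : A l) by (apply (HA (fun n => a (phi n)) l); auto; intros n; apply Ha).
  exists phi, (f l). split; auto. split. exists l; auto.
  intros eps He. destruct (Hc eps He) as [N HN]. exists N. intros n Hn.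
  rewrite (proj2 (Ha (phi n))). rewrite Hf. auto.
Qed.

Lemma closed_true (X : MetricSpace) : Defs.closed_set X (fun _ => True).
Proof. intros u l _ _; auto. Qed.

Lemma full_img {T1 T2 : Type} (f : T1 -> T2) : (fun z => exists a, z = f a) = img f (fun _ => True).
Proof. apply setext; intro z; split. intros [a ->]; exists a; auto. intros [a [_ ->]]; eauto. Qed.

Lemma attain_delta (Z : MetricSpace) (B : Z -> Prop) a : good Z B ->
  exists b, B b /\ mdist a b <= delta (@mdist Z) a B.
Proof.
  intros HB. destruct (attain Z B a HB) as [b [Hb Hm]]. exists b; split; auto.
  apply Rinf_ge. destruct HB as [[c Hc] _]; eauto. intros x [c [Hc ->]]; auto.
Qed.

Lemma corr (X Y Z : MetricSpace) (f : X -> Z) (g : Y -> Z) r :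
  compact_space X -> compact_space Y ->
  isometric_embedding (@mdist X) Z f -> isometric_embedding (@mdist Y) Z g ->
  hausdorff (@mdist Z) (fun z => exists a, z = f a) (fun z => exists b, z = g b) <= r ->
  forall (a : X) (b : Y),
  (exists b', mdist (f a) (g b') <= r) /\ (exists a', mdist (f a') (g b) <= r).
Proof.
  intros HX HY Hf Hg Hr a b.
  rewrite !full_img in Hr.
  assert (GX : good Z (img f (fun _ => True))) by (apply img_good; auto using closed_true; exists a; auto).
  assert (GY : good Z (img g (fun _ => True))) by (apply img_good; auto using closed_true; exists b; auto).
  rewrite haus_h1 in Hr by apply Defs.dist_sym.
  pose proof (Rmax_l (h1 mdist (img f (fun _ => True)) (img g (fun _ => True))) (h1 mdist (img g (fun _ => True)) (img f (fun _ => True)))).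
  pose proof (Rmax_r (h1 mdist (img f (fun _ => True)) (img g (fun _ => True))) (h1 mdist (img g (fun _ => True)) (img f (fun _ => True)))).
  split.
  - assert (Ha : img f (fun _ => True) (f a)) by (exists a; auto).
    pose proof (delta_le_h1 Z _ _ _ GX GY Ha).
    destruct (attain_delta Z _ (f a) GY) as [w [[b' [_ ->]] Hw]].
    exists b'. lra.
  - assert (Hb : img g (fun _ => True) (g b)) by (exists b; auto).
    pose proof (delta_le_h1 Z _ _ _ GY GX Hb).
    destruct (attain_delta Z _ (g b) GX) as [w [[a' [_ ->]] Hw]].
    exists a'. rewrite Defs.dist_sym. lra.
Qed.

Lemma closed_corr (P Q : MetricSpace) (A : P -> Prop) (F : P -> Q -> R) r :
  compact_space P -> Defs.closed_set P A ->
  (forall p p' q q', F p q <= F p' q' + mdist p p' + mdist q q') ->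
  Defs.closed_set Q (fun q => exists p, A p /\ F p q <= r).
Proof.
  intros HP HA HF u l Hu Hc. apply choice_nat in Hu as [a Ha].
  destruct (HP a) as [phi [l' [Hp Hc']]].
  assert (Hl : A l') by (apply (HA (fun n => a (phi n)) l'); auto; intros n; apply Ha).
  exists l'. split; auto. apply le_eps. intros eps He.
  pose proof (sub_conv _ u l phi Hc Hp) as Hc2.
  destruct (Hc' (eps/2) ltac:(lra)) as [N1 HN1].
  destruct (Hc2 (eps/2) ltac:(lra)) as [N2 HN2].
  set (n := Nat.max N1 N2).
  specialize (HN1 n ltac:(unfold n; lia)). specialize (HN2 n ltac:(unfold n; lia)).
  simpl in *.
  pose proof (HF l' (a (phi n)) l (u (phi n))).
  pose proof (proj2 (Ha (phi n))).
  rewrite (Defs.dist_sym P) in H. rewrite (Defs.dist_sym Q) in H. lra.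
Qed.

Definition Eset {T1 : Type} (d1 : T1 -> T1 -> R) {T2 : Type} (d2 : T2 -> T2 -> R) (r : R) : Prop :=
  exists (Z : MetricSpace) (f : T1 -> Z) (g : T2 -> Z),
          isometric_embedding d1 Z f /\ isometric_embedding d2 Z g /\
          hausdorff (@mdist Z) (fun z => exists a, z = f a) (fun z => exists b, z = g b) <= r.

Lemma GH_Eset {T1 : Type} (d1 : T1 -> T1 -> R) {T2 : Type} (d2 : T2 -> T2 -> R) :
  GH d1 d2 = Rinf (Eset d1 d2).
Proof. reflexivity. Qed.

Lemma Eset_nonneg {T1 : Type} (d1 : T1 -> T1 -> R) {T2 : Type} (d2 : T2 -> T2 -> R) r :
  Eset d1 d2 r -> 0 <= r.
Proof.
  intros [Z [f [g [_ [_ H]]]]]. eapply Rle_trans; [|exact H].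
  apply hausdorff_nonneg. apply dist_nonneg.
Qed.

Section Step1.
Variables X Y : MetricSpace.
Hypothesis HX : compact_space X.
Hypothesis HY : compact_space Y.

Lemma step1 r : Eset (@mdist X) (@mdist Y) r -> Eset (hyp_dist X) (hyp_dist Y) r.
Proof.
  intros [Z [f [g [Hf [Hg Hr]]]]].
  assert (Hr0 : 0 <= r) by (eapply Rle_trans; [|exact Hr]; apply hausdorff_nonneg; apply dist_nonneg).
  set (P := fun S : Z -> Prop => (exists A : Hyp X, S = img f (proj1_sig A)) \/ (exists B : Hyp Y, S = img g (proj1_sig B))).
  assert (HP : forall S, P S -> good Z S).
  { intros S [[A ->]|[B ->]].
    - destruct A as [A [HA1 HA2]]; apply img_good; auto.
    - destruct B as [B [HB1 HB2]]; apply img_good; auto. }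
  set (Z' := HSpace Z P HP).
  set (Phi := fun A : Hyp X => (exist P (img f (proj1_sig A)) (or_introl (ex_intro _ A eq_refl)) : Z')).
  set (Psi := fun B : Hyp Y => (exist P (img g (proj1_sig B)) (or_intror (ex_intro _ B eq_refl)) : Z')).
  exists Z', Phi, Psi. split; [|split].
  - intros A A'. simpl. unfold hyp_dist. apply hausdorff_img. apply Hf.
  - intros B B'. simpl. unfold hyp_dist. apply hausdorff_img. apply Hg.
  - apply hausdorff_le_inf; auto.
    + intros S [A ->].
      destruct (classic (inhabited Y)) as [[y0]|HYe].
      * destruct A as [A [[a0 Ha0] HAc]].
        set (B := fun b => exists a, A a /\ mdist (f a) (g b) <= r).
        assert (HB : (exists b, B b) /\ Defs.closed_set Y B).
        { split.
          - destruct (proj1 (corr X Y Z f g r HX HY Hf Hg Hr a0 y0)) as [b Hb]. exists b, a0; auto.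
          - apply closed_corr; auto. intros p p' q q'.
            pose proof (Defs.dist_tri Z (f p) (f p') (g q)).
            pose proof (Defs.dist_tri Z (f p') (g q') (g q)).
            rewrite Hf in H. rewrite Hg in H0. rewrite (Defs.dist_sym Y q' q) in H0. lra. }
        apply Rinf_wit with (b := Psi (exist _ B HB)). intros; apply dist_nonneg.
        eauto. simpl.
        apply hausdorff_le_inf; auto.
        -- intros z [a [Ha ->]].
           destruct (proj1 (corr X Y Z f g r HX HY Hf Hg Hr a y0)) as [b Hb].
           apply Rinf_wit with (P := fun w => mdist (f a) w) (b := g b). intros; apply dist_nonneg.
           exists b; split; auto. exists a; auto. auto.
        -- intros w [b [[a [Ha Hab]] ->]].
           apply Rinf_wit with (P := fun z => mdist z (g b)) (b := f a). intros; apply dist_nonneg.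
           exists a; auto. auto.
      * rewrite Rinf_empty; auto. intros [t [T [[B ->] _]]].
        destruct B as [B [[b _] _]]. apply HYe; constructor; auto.
    + intros T [B ->].
      destruct (classic (inhabited X)) as [[x0]|HXe].
      * destruct B as [B [[b0 Hb0] HBc]].
        set (A := fun a => exists b, B b /\ mdist (f a) (g b) <= r).
        assert (HA : (exists a, A a) /\ Defs.closed_set X A).
        { split.
          - destruct (proj2 (corr X Y Z f g r HX HY Hf Hg Hr x0 b0)) as [a Ha]. exists a, b0; auto.
          - apply (closed_corr Y X B (fun q p => mdist (f p) (g q))); auto. intros p p' q q'.
            pose proof (Defs.dist_tri Z (f q) (f q') (g p)).
            pose proof (Defs.dist_tri Z (f q') (g p') (g p)).
            rewrite Hf in H. rewrite Hg in H0. rewrite (Defs.dist_sym Y p' p) in H0. lra. }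
        apply Rinf_wit with (P := fun S => mdist S (Psi (exist _ B (conj (ex_intro _ b0 Hb0) HBc)))) (b := Phi (exist _ A HA)). intros; apply dist_nonneg.
        eauto. simpl.
        apply hausdorff_le_inf; auto.
        -- intros z [a [[b [Hb Hab]] ->]].
           apply Rinf_wit with (P := fun w => mdist (f a) w) (b := g b). intros; apply dist_nonneg.
           exists b; auto. auto.
        -- intros w [b [Hb ->]].
           destruct (proj2 (corr X Y Z f g r HX HY Hf Hg Hr x0 b)) as [a Ha].
           apply Rinf_wit with (P := fun z => mdist z (g b)) (b := f a). intros; apply dist_nonneg.
           exists a; split; auto. exists b; auto. auto.
      * rewrite Rinf_empty; auto. intros [t [S [[A ->] _]]].
        destruct A as [A [[a _] _]]. apply HXe; constructor; auto.
Qed.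

End Step1.

Section Union.
Variables X Y : MetricSpace.
Variables (x0 : X) (y0 : Y).

Definition sdist (p q : X + Y) : R :=
  match p, q with
  | inl a, inl a' => mdist a a'
  | inr b, inr b' => mdist b b'
  | inl a, inr b => 1 + mdist a x0 + mdist y0 b
  | inr b, inl a => 1 + mdist a x0 + mdist y0 b
  end.

Definition USpace : MetricSpace.
Proof.
  refine {| carrier := (X + Y)%type; mdist := sdist |}.
  - intros [a|b] [a'|b']; simpl; split; intros H.
    + apply Defs.dist_eq0 in H; subst; auto.
    + injection H as ->; apply dist_refl.
    + pose proof (dist_nonneg X a x0); pose proof (dist_nonneg Y y0 b'); lra.
    + discriminate.
    + pose proof (dist_nonneg X a' x0); pose proof (dist_nonneg Y y0 b); lra.
    + discriminate.
    + apply Defs.dist_eq0 in H; subst; auto.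
    + injection H as ->; apply dist_refl.
  - intros [a|b] [a'|b']; simpl; auto using Defs.dist_sym.
  - intros [a|b] [a'|b'] [a''|b'']; simpl.
    + apply Defs.dist_tri.
    + pose proof (Defs.dist_tri X a a' x0). lra.
    + pose proof (Defs.dist_tri X a x0 a''). rewrite (Defs.dist_sym X x0 a'') in H.
      pose proof (dist_nonneg Y y0 b'). lra.
    + pose proof (Defs.dist_tri Y y0 b' b''). lra.
    + pose proof (Defs.dist_tri X a'' a' x0). rewrite (Defs.dist_sym X a'' a') in H. lra.
    + pose proof (Defs.dist_tri Y b y0 b''). rewrite (Defs.dist_sym Y b y0) in H.
      pose proof (dist_nonneg X a' x0). lra.
    + pose proof (Defs.dist_tri Y y0 b' b). rewrite (Defs.dist_sym Y b' b) in H. lra.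
    + apply Defs.dist_tri.
Defined.

End Union.

Lemma Eset_ne (X Y : MetricSpace) : exists r, Eset (@mdist X) (@mdist Y) r.
Proof.
  destruct (classic (inhabited X)) as [[x0]|HXe].
  - destruct (classic (inhabited Y)) as [[y0]|HYe].
    + set (Z := USpace X Y x0 y0).
      exists (hausdorff (@mdist Z) (fun z => exists a, z = (inl a : Z)) (fun z => exists b, z = (inr b : Z))).
      exists Z, (fun a => inl a : Z), (fun b => inr b : Z). split; [|split].
      * intros a b; reflexivity.
      * intros a b; reflexivity.
      * apply Rle_refl.
    + set (g := fun b : Y => False_rect X (HYe (inhabits b))).
      exists (hausdorff (@mdist X) (fun z => exists a, z = a) (fun z => exists b, z = g b)).
      exists X, (fun a => a), g. split; [|split].
      * intros a b; reflexivity.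
      * intros a b; exfalso; apply HYe; constructor; auto.
      * apply Rle_refl.
  - set (f := fun a : X => False_rect Y (HXe (inhabits a))).
    exists (hausdorff (@mdist Y) (fun z => exists a, z = f a) (fun z => exists b, z = b)).
    exists Y, f, (fun b => b). split; [|split].
    * intros a b; exfalso; apply HXe; constructor; auto.
    * intros a b; reflexivity.
    * apply Rle_refl.
Qed.

Theorem part1 (X Y : MetricSpace) : compact_space X -> compact_space Y ->
  GH (hyp_dist X) (hyp_dist Y) <= GH (@mdist X) (@mdist Y).
Proof.
  intros HX HY. rewrite !GH_Eset. apply Rinf_mono.
  - apply Eset_ne.
  - apply step1; auto.
  - apply Eset_nonneg.
Qed.

Lemma closed_sing (Y : MetricSpace) (y : Y) : Defs.closed_set Y (fun z => z = y).
Proof.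
  intros u l Hu Hc. symmetry. apply Defs.dist_eq0. apply Rle_antisym; [|apply dist_nonneg].
  apply le_eps. intros eps He. destruct (Hc eps He) as [N HN]. specialize (HN N (le_n _)).
  rewrite Hu in HN. lra.
Qed.

Definition sing (Y : MetricSpace) (y : Y) : Hyp Y :=
  exist _ (fun z => z = y) (conj (ex_intro _ y eq_refl) (closed_sing Y y)).

Lemma hyp_sing (Y : MetricSpace) (y y' : Y) : hyp_dist Y (sing Y y) (sing Y y') = mdist y y'.
Proof.
  unfold hyp_dist, hausdorff; simpl.
  assert (H1 : Rinf (fun t => exists b, b = y' /\ t = mdist y b) = mdist y y').
  { apply Rinf_single. intros t; split. intros [b [-> ->]]; auto. intros ->; eauto. }
  assert (H2 : Rinf (fun t => exists a, a = y /\ t = mdist a y') = mdist y y').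
  { apply Rinf_single. intros t; split. intros [b [-> ->]]; auto. intros ->; eauto. }
  rewrite (Rsup_single _ (mdist y y')). rewrite (Rsup_single _ (mdist y y')).
  unfold Rmax; destruct (Rle_dec _ _); auto.
  - intros s; split. intros [b [-> ->]]; auto. intros ->; eauto.
  - intros s; split. intros [b [-> ->]]; auto. intros ->; eauto.
Qed.

Lemma good_full (Y : MetricSpace) (y0 : Y) : compact_space Y -> good Y (fun _ => True).
Proof.
  intros HY. split. eauto. intros u _. destruct (HY u) as [phi [l [Hp Hc]]]. exists phi, l; auto.
Qed.

Lemma hyp_bounded (Y : MetricSpace) (y0 : Y) : compact_space Y ->
  exists M, forall B B' : Hyp Y, hyp_dist Y B B' <= M.
Proof.
  intros HY. destruct (good_bounded Y _ y0 (good_full Y y0 HY)) as [M HM].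
  assert (M0 : 0 <= M) by (pose proof (HM y0 I) as Hh; rewrite dist_refl in Hh; exact Hh).
  exists (2 * M). intros [B [[b0 Hb0] Hc1]] [B' [[b0' Hb0'] Hc2]]. unfold hyp_dist; simpl.
  apply hausdorff_le_inf. lra.
  - intros a Ha. apply Rinf_wit with (P := fun b => mdist a b) (b := b0'). intros; apply dist_nonneg. auto.
    pose proof (Defs.dist_tri Y a y0 b0'). pose proof (HM a I). pose proof (HM b0' I).
    rewrite (Defs.dist_sym Y y0 b0') in H. lra.
  - intros b Hb. apply Rinf_wit with (P := fun a => mdist a b) (b := b0). intros; apply dist_nonneg. auto.
    pose proof (Defs.dist_tri Y b0 y0 b). pose proof (HM b0 I). pose proof (HM b I).
    rewrite (Defs.dist_sym Y y0 b) in H. lra.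
Qed.

Section Step2.
Variables (X : MetricSpace) (x : X).
Hypothesis Hx : forall y : X, y = x.
Variable Y : MetricSpace.
Hypothesis HY : compact_space Y.

Definition A0 : Hyp X := exist _ (fun _ => True) (conj (ex_intro _ x I) (closed_true X)).

Lemma hypX_unique (A : Hyp X) : A = A0.
Proof.
  destruct A as [A [[a Ha] Hc]]. unfold A0.
  assert (A = fun _ => True).
  { apply setext. intros z; split; auto. intros _. rewrite (Hx z), <- (Hx a). auto. }
  subst. f_equal. apply proof_irrelevance.
Qed.

Lemma step2 r : Eset (hyp_dist X) (hyp_dist Y) r -> Eset (@mdist X) (@mdist Y) r.
Proof.
  intros [Z [F [G [HF [HG Hr]]]]].
  assert (Hr0 : 0 <= r) by (eapply Rle_trans; [|exact Hr]; apply hausdorff_nonneg; apply dist_nonneg).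
  set (p := F A0).
  assert (Key : forall B : Hyp Y, mdist p (G B) <= r).
  { intros B. destruct B as [B0 [[y0 Hy0] HB0]] eqn:EB. rewrite <- EB.
    destruct (hyp_bounded Y y0 HY) as [M HM].
    assert (Hin : forall w, Rinf (fun t => exists z, (exists A, z = F A) /\ t = mdist z w) = mdist p w).
    { intros w. apply Rinf_single. intros t; split.
      - intros [z [[A ->] ->]]. rewrite (hypX_unique A). auto.
      - intros ->. exists p. split; auto. exists A0; auto. }
    eapply Rle_trans; [|exact Hr]. unfold hausdorff. eapply Rle_trans; [|apply Rmax_r].
    apply Rsup_ge with (M := mdist p (G B) + M).
    - exists (G B). split. eauto. rewrite Hin; auto.
    - intros s [w [[B' ->] ->]]. rewrite Hin.
      pose proof (Defs.dist_tri Z p (G B) (G B')). rewrite HG in H. pose proof (HM B B'). lra. }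
  exists Z, (fun _ => p), (fun y => G (sing Y y)). split; [|split].
  - intros a b. rewrite dist_refl, (Hx a), (Hx b), dist_refl. auto.
  - intros a b. rewrite HG. apply hyp_sing.
  - apply hausdorff_le_inf; auto.
    + intros z [a ->]. destruct (classic (inhabited Y)) as [[y0]|HYe].
      * apply Rinf_wit with (P := fun w => mdist p w) (b := G (sing Y y0)). intros; apply dist_nonneg.
        eauto. apply Key.
      * rewrite Rinf_empty; auto. intros [t [w [[b _] _]]]. apply HYe; constructor; auto.
    + intros w [b ->]. apply Rinf_wit with (P := fun z => mdist z (G (sing Y b))) (b := p).
      intros; apply dist_nonneg. exists x; auto. apply Key.
Qed.

End Step2.

Theorem mainTheorem10 :
  (forall X Y : MetricSpace, compact_space X -> compact_space Y ->
     GH (hyp_dist X) (hyp_dist Y) <= GH (@mdist X) (@mdist Y)) /\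
  (forall (X : MetricSpace) (x : X), (forall y : X, y = x) ->
   forall Y : MetricSpace, compact_space Y ->
     GH (hyp_dist X) (hyp_dist Y) = GH (@mdist X) (@mdist Y)).
Proof.
  split.
  - apply part1.
  - intros X x Hx Y HY.
    assert (HX : compact_space X).
    { intros u. exists (fun n => n), x. split. intros n m H; auto.
      intros eps He. exists O. intros n _. rewrite (Hx (u n)), dist_refl; auto. }
    apply Rle_antisym. apply part1; auto.
    rewrite !GH_Eset. apply Rinf_mono.
    + destruct (Eset_ne X Y) as [r Hr]. exists r. apply step1; auto.
    + apply step2 with x; auto.
    + apply Eset_nonneg.
Qed.
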